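(* A nonzero $Q(X,Y)\in M_{s,\ell}$ has minimal $(1,k-1)$-weighted degree among the nonzero elements of $M_{s,\ell}$ if and only if $\varphi(Q(X,Y))$ has minimal $(1,-1)$-weighted degree among the nonzero elements of $\varphi(M_{s,\ell})$.
   Context: Let $\mathbb F_q$ be a finite field, $1\le k<n<q$, $\alpha_0,\dots,\alpha_{n-1}$ distinct nonzero elements of $\mathbb F_q$, $w_0,\dots,w_{n-1}$ nonzero elements of $\mathbb F_q$, and $r\in\mathbb F_q^n$ a word with $r_i=0$ for $i=0,\dots,k-1$; let $r_i'=r_i/w_i$. For positive integers $s\le\ell$, $M_{s,\ell}$ is the $\mathbb F_q[X]$-module of all $Q\in\mathbb F_q[X,Y]$ of $Y$-degree at most $\ell$ such that for each $i$, $Q(X+\alpha_i,Y+r_i')$ has no monomials of total degree less than $s$. Let $L(X)=\prod_{i=0}^{k-1}(X-\alpha_i)$ and $\varphi(Q)(X,Y)=L(X)^{-s}Q(X,L(X)Y)$ for $Q\in M_{s,\ell}$ (under the assumption on $r$, $\varphi(Q)\in\mathbb F_q[X,Y]$); $\varphi(M_{s,\ell})$ is the image. For integers $u,v$, the $(u,v)$-weighted degree of a nonzero bivariate polynomial is the maximum of $ui+vj$ over its monomials $X^iY^j$. *)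

(* Defs.v *)
(* Bivariate polynomials Q(X,Y) are elements of
   {poly {poly F}}: the outer variable is Y, coefficients are polynomials
   in X.  The coefficient of X^i Y^j in Q is (Q`_j)`_i. *)
From HB Require Import structures.
From mathcomp Require Import all_boot all_order all_algebra all_field.
Set Implicit Arguments. Unset Strict Implicit. Unset Printing Implicit Defensive.
Import Order.TTheory GRing.Theory Num.Theory.
Local Open Scope ring_scope.

Section Defs.
Variable F : fieldType.

Definition monomial_weights (u v : int) (Q : {poly {poly F}}) : seq int :=
  flatten [seq [seq u * (i%:Z) + v * (j%:Z)
               | i <- iota 0 (size Q`_j) & (Q`_j)`_i != 0]
          | j <- iota 0 (size Q)].

(* (u,v)-weighted degree: maximum of u*i+v*j over the monomials of Q
   (meaningful for Q != 0). *)
Definition wdeg (u v : int) (Q : {poly {poly F}}) : int :=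
  let s := monomial_weights u v Q in foldr Num.max (head 0 s) s.

Definition shiftXY (a b : F) (Q : {poly {poly F}}) : {poly {poly F}} :=
  (map_poly (fun c : {poly F} => c \Po ('X + a%:P)) Q) \Po ('X + (b%:P)%:P).

Definition vanish_order (s : nat) (a b : F) (Q : {poly {poly F}}) : Prop :=
  forall i j : nat, (i + j < s)%N -> ((shiftXY a b Q)`_j)`_i = 0.

(* membership in M_{s,l} ; rp i stands for r'_i = r_i / w_i *)
Definition inM (n s l : nat) (alpha rp : 'I_n -> F) (Q : {poly {poly F}}) : Prop :=
  (size Q <= l.+1)%N /\ forall i : 'I_n, vanish_order s (alpha i) (rp i) Q.

Definition Lpoly (n k : nat) (alpha : 'I_n -> F) : {poly F} :=
  \prod_(i < n | (i < k)%N) ('X - (alpha i)%:P).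

(* phi(Q) = L(X)^{-s} Q(X, L(X) Y); the division is exact on M_{s,l}. *)
Definition phi (L : {poly F}) (s : nat) (Q : {poly {poly F}}) : {poly {poly F}} :=
  map_poly (fun c : {poly F} => c %/ L ^+ s) (Q \Po (L%:P * 'X)).

End Defs.

(* Main.v *)
Require Import Defs.
From HB Require Import structures.
From mathcomp Require Import all_boot all_order all_algebra all_field.
From mathcomp Require Import zify.
Import Order.TTheory GRing.Theory Num.Theory.
Local Open Scope ring_scope.

Section Aux.
Variable F : fieldType.

Lemma nz_size {T : nzSemiRingType} (p : {poly T}) i : p`_i != 0 -> (i < size p)%N.
Proof. by rewrite ltnNge; apply: contra => h; rewrite nth_default. Qed.

Lemma coef_compLX (L : {poly F}) (R : {poly {poly F}}) j :
  (R \Po (L%:P * 'X))`_j = R`_j * L ^+ j.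
Proof.
rewrite coef_comp_poly.
under eq_bigr => i _ do rewrite exprMn -rmorphXn coefCM coefXn.
case: (ltnP j (size R)) => hj.
  rewrite (bigD1 (Ordinal hj)) //= eqxx mulr1 big1 ?addr0 // => i /negbTE hi.
  by rewrite eq_sym -(inj_eq val_inj) /= in hi; rewrite hi mulr0 mulr0.
rewrite nth_default // mul0r big1 // => i _.
by rewrite eq_sym; case: eqP => [e|_]; [move: (ltn_ord i); rewrite e ltnNge hj | rewrite !mulr0].
Qed.

Lemma Xn_dvd (p : {poly F}) m : (forall i, (i < m)%N -> p`_i = 0) -> 'X^m %| p.
Proof.
move=> h; rewrite -(poly_take_drop m p).
have -> : take_poly m p = 0.
  by apply/polyP => i; rewrite coef_take_poly coef0; case: ifP => // /h.
by rewrite add0r dvdp_mulIr.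
Qed.

Lemma XsubC_dvd (p : {poly F}) a m :
  'X^m %| p \Po ('X + a%:P) -> ('X - a%:P) ^+ m %| p.
Proof.
case/dvdpP => q e.
rewrite -(comp_polyXaddC_K p a) e comp_polyM comp_Xn_poly.
exact: dvdp_mull.
Qed.

Lemma prod_dvd (I : eqType) (r : seq I) (a : I -> F) m p :
  uniq (map a r) -> (forall i, i \in r -> ('X - (a i)%:P) ^+ m %| p) ->
  \prod_(i <- r) ('X - (a i)%:P) ^+ m %| p.
Proof.
elim: r => [|x r IH] /=; first by rewrite big_nil dvd1p.
case/andP => hx hu h; rewrite big_cons Gauss_dvdp.
  by rewrite h ?mem_head // IH // => i hi; rewrite h // in_cons hi orbT.
apply: coprimep_expl; rewrite coprimep_sym coprimep_XsubC rootE horner_prod.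
rewrite prodf_seq_neq0; apply/allP => i hi /=.
rewrite horner_exp hornerXsubC expf_eq0 subr_eq0 negb_and; apply/orP; right.
by apply: contra hx => /eqP ->; exact: map_f hi.
Qed.


Lemma mw_mem (v : int) (Q : {poly {poly F}}) x :
  x \in monomial_weights 1 v Q <-> exists j i, (Q`_j)`_i != 0 /\ x = i%:Z + v * j%:Z.
Proof.
rewrite /monomial_weights; split.
  move/flattenP => [t /mapP [j _ ->] /mapP [i]]; rewrite mem_filter => /andP [nz _] ->.
  by exists j, i; rewrite mul1r.
move=> [j [i [nz ->]]]; apply/flattenP.
have nzj : Q`_j != 0 by apply: contraNneq nz => ->; rewrite coef0.
exists [seq 1 * (i0%:Z) + v * (j%:Z) | i0 <- iota 0 (size Q`_j) & (Q`_j)`_i0 != 0].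
  by apply/mapP; exists j => //; rewrite mem_iota add0n nz_size.
apply/mapP; exists i; last by rewrite mul1r.
by rewrite mem_filter nz mem_iota add0n nz_size.
Qed.

Lemma foldmax_ge (t : seq int) a : forall x, x \in a :: t -> x <= foldr Num.max a t.
Proof.
elim: t => [|y t IH] x; first by rewrite mem_seq1 => /eqP ->.
rewrite /= le_max !in_cons => /or3P [/eqP->|/eqP->|hx].
- by rewrite IH ?mem_head ?orbT.
- by rewrite lexx.
- by rewrite IH ?orbT // in_cons hx orbT.
Qed.

Lemma foldmax_mem (t : seq int) a : foldr Num.max a t \in a :: t.
Proof.
elim: t => [|y t IH]; first by rewrite mem_head.
rewrite /=; case: (leP y (foldr Num.max a t)) => _.
  by move: IH; rewrite !in_cons => /orP [->|->]; rewrite ?orbT.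
by rewrite !in_cons eqxx orbT.
Qed.

Lemma foldmax_mem' (t : seq int) x : x \in t -> foldr Num.max (head 0 t) t \in t.
Proof. by case: t => // y t' _; move=> /=; case: (leP y (foldr Num.max y t')) => _; [exact: foldmax_mem | exact: mem_head]. Qed.

Lemma wdeg_ge (v : int) (Q : {poly {poly F}}) j i : (Q`_j)`_i != 0 ->
  i%:Z + v * j%:Z <= wdeg 1 v Q.
Proof.
move=> nz; rewrite /wdeg; apply: foldmax_ge; rewrite in_cons; apply/orP; right.
by apply/mw_mem; exists j, i.
Qed.

Lemma wdeg_attained (v : int) (Q : {poly {poly F}}) : Q != 0 ->
  exists j i, (Q`_j)`_i != 0 /\ wdeg 1 v Q = i%:Z + v * j%:Z.
Proof.
move=> nz.
have nzl : Q`_(size Q).-1 != 0 by rewrite -lead_coefE lead_coef_eq0.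
have nzll : (Q`_(size Q).-1)`_(size Q`_(size Q).-1).-1 != 0
  by rewrite -lead_coefE lead_coef_eq0.
set t := monomial_weights 1 v Q.
have : (size Q`_(size Q).-1).-1%:Z + v * (size Q).-1%:Z \in t
  by apply/mw_mem; do 2 eexists; split; [exact: nzll|].
move=> hin; rewrite /wdeg -/t.
have : foldr Num.max (head 0 t) t \in t by apply: foldmax_mem' hin.
by move/mw_mem.
Qed.


Lemma coef_phi (L : {poly F}) s (R : {poly {poly F}}) j :
  (phi L s R)`_j = (R`_j * L ^+ j) %/ L ^+ s.
Proof. by rewrite /phi coef_map_id0 ?div0p // coef_compLX. Qed.

Lemma phi_coef_size (L : {poly F}) s (R : {poly {poly F}}) j :
  L != 0 -> L ^+ s %| R`_j * L ^+ j -> R`_j != 0 ->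
  (phi L s R)`_j != 0 /\
  (size ((phi L s R)`_j)%R + (size L).-1 * s = size (R`_j)%R + (size L).-1 * j)%N.
Proof.
move=> hL hd nz; rewrite coef_phi.
have e := divpK hd.
have hq : (R`_j * L ^+ j) %/ L ^+ s != 0.
  apply/negP => /eqP h0; move/negP: nz; apply; move: e; rewrite h0 mul0r => /esym/eqP.
  by rewrite mulf_eq0 expf_eq0 (negbTE hL) andbF orbF.
split => //.
have hLn : forall m, L ^+ m != 0 by move=> m; rewrite expf_eq0 (negbTE hL) andbF.
move: (congr1 (fun p : {poly F} => size p) e) => /=; rewrite !size_mul // => e2.
have sz : forall m, size (L ^+ m) = ((size L).-1 * m).+1.
  move=> m; rewrite -size_exp prednK // lt0n size_poly_eq0 //.
move: e2; rewrite !sz !addnS /=.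
have : (0 < size ((R`_j * L ^+ j) %/ L ^+ s)%R)%N by rewrite lt0n size_poly_eq0.
have : (0 < size (R`_j)%R)%N by rewrite lt0n size_poly_eq0.
by move=> _ _.
Qed.

Lemma shift0 a (R : {poly {poly F}}) :
  shiftXY a 0 R = map_poly (fun c : {poly F} => c \Po ('X + a%:P)) R.
Proof. by rewrite /shiftXY !polyC0 addr0 comp_polyXr. Qed.

Lemma L_dvd n k (alpha : 'I_n -> F) s (R : {poly {poly F}}) :
  injective alpha ->
  (forall i : 'I_n, (i < k)%N -> vanish_order s (alpha i) 0 R) ->
  forall j, Lpoly k alpha ^+ (s - j) %| R`_j.
Proof.
move=> inj hv j; rewrite /Lpoly -prodrXl -big_filter.
apply: prod_dvd.
  by rewrite map_inj_uniq // filter_uniq // index_enum_uniq.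
move=> i; rewrite mem_filter => /andP [hik _].
apply: XsubC_dvd; apply: Xn_dvd => i' hi'.
have := hv i hik i' j; rewrite shift0 coef_map_id0 ?comp_poly0 //.
by apply; lia.
Qed.

Lemma size_L n k (alpha : 'I_n -> F) : (k <= n)%N -> size (Lpoly k alpha) = k.+1.
Proof.
move=> hkn; rewrite /Lpoly size_prod; last by move=> i _; rewrite polyXsubC_eq0.
under eq_bigr => i _ do rewrite size_XsubC.
have hc : #|[pred i : 'I_n | (i < k)%N]| = k.
  rewrite -sum1_card -(big_ord_widen n (fun _ => 1%N)) //.
  by rewrite sum1_card card_ord.
have -> : (\sum_(i < n | (i < k)%N) 2 = 2 * k)%N.
  by rewrite -(big_ord_widen n (fun _ => 2%N)) // sum_nat_const card_ord mulnC.
rewrite (_ : #|_| = k) ?hc //; lia.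
Qed.

Lemma phi_coef0 (L : {poly F}) s (R : {poly {poly F}}) j :
  R`_j = 0 -> (phi L s R)`_j = 0.
Proof. by move=> h; rewrite coef_phi h mul0r div0p. Qed.

Lemma lead_nz {T : nzSemiRingType} (p : {poly T}) : p != 0 ->
  p`_(size p).-1 != 0.
Proof. by move=> nz; rewrite -lead_coefE lead_coef_eq0. Qed.

Lemma wdeg_phi (L : {poly F}) s (R : {poly {poly F}}) k :
  size L = k.+1 -> (forall j, L ^+ s %| R`_j * L ^+ j) -> R != 0 ->
  phi L s R != 0 /\
  wdeg 1 (-1) (phi L s R) = wdeg 1 (k%:Z - 1) R - (k * s)%N%:Z.
Proof.
move=> hsz hd nz.
have hL : L != 0 by rewrite -size_poly_eq0 hsz.
have cz : forall j, R`_j != 0 -> (phi L s R)`_j != 0 /\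
    (size ((phi L s R)`_j)%R + k * s = size (R`_j)%R + k * j)%N.
  by move=> j hj; have := @phi_coef_size L s R j hL (hd j) hj; rewrite hsz.
have hphi : phi L s R != 0.
  have [h _] := cz _ (lead_nz _ nz).
  by apply: contraNneq h => ->; rewrite coef0.
split => //; apply/eqP; rewrite eq_le; apply/andP; split.
  have [j [i [nzi ->]]] := @wdeg_attained (-1) _ hphi.
  have nzj : R`_j != 0.
    by apply: contraNneq nzi => /(phi_coef0 L s) ->; rewrite coef0.
  have [hpj hs] := cz j nzj.
  have hi := nz_size _ _ nzi.
  have := @wdeg_ge (k%:Z - 1) R j _ (lead_nz _ nzj).
  have : (0 < size (R`_j)%R)%N by rewrite lt0n size_poly_eq0.
  lia.
have [j [i [nzi ->]]] := @wdeg_attained (k%:Z - 1) _ nz.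
have nzj : R`_j != 0 by apply: contraNneq nzi => ->; rewrite coef0.
have [hpj hs] := cz j nzj.
have hi := nz_size _ _ nzi.
have := @wdeg_ge (-1) (phi L s R) j _ (lead_nz _ hpj).
have : (0 < size ((phi L s R)`_j)%R)%N by rewrite lt0n size_poly_eq0.
lia.
Qed.

End Aux.

Lemma inM_phi {F : fieldType} {k n : nat} {alpha w r : 'I_n -> F} {s l : nat}
  (Hkn : (k < n)%N) (Halpha_inj : injective alpha)
  (Hr0 : forall i : 'I_n, (i < k)%N -> r i = 0)
  {R : {poly {poly F}}} :
  inM s l alpha (fun i => r i / w i) R -> R != 0 ->
  phi (Lpoly k alpha) s R != 0 /\
  wdeg 1 (-1) (phi (Lpoly k alpha) s R) = wdeg 1 (k%:Z - 1) R - (k * s)%N%:Z.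
Proof.
move=> [_ hv] nz.
have hsz := @size_L F n k alpha (ltnW Hkn).
have hL : Lpoly k alpha != 0 by rewrite -size_poly_eq0 hsz.
apply: wdeg_phi => //.
move=> j; rewrite dvdp_exp_sub //.
apply: L_dvd => // i hi; by have := hv i; rewrite Hr0 // mul0r.
Qed.

Theorem corollary4 (F : finFieldType) (k n : nat)
    (alpha w r : 'I_n -> F) (s l : nat)
    (Hk : (1 <= k)%N) (Hkn : (k < n)%N) (Hnq : (n < #|F|)%N)
    (Halpha_inj : injective alpha) (Halpha0 : forall i, alpha i != 0)
    (Hw0 : forall i, w i != 0)
    (Hr0 : forall i : 'I_n, (i < k)%N -> r i = 0)
    (Hs : (0 < s)%N) (Hsl : (s <= l)%N)
    (Q : {poly {poly F}}) (HQ0 : Q != 0)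
    (HQM : inM s l alpha (fun i => r i / w i) Q) :
  let rp := fun i => r i / w i in
  let L := Lpoly k alpha in
  (forall P : {poly {poly F}}, P != 0 -> inM s l alpha rp P ->
      wdeg 1 (k%:Z - 1) Q <= wdeg 1 (k%:Z - 1) P)
  <->
  (forall P : {poly {poly F}}, P != 0 ->
      (exists2 R : {poly {poly F}}, inM s l alpha rp R & P = phi L s R) ->
      wdeg 1 (-1) (phi L s Q) <= wdeg 1 (-1) P).
Proof.
move=> rp L.
have [_ eQ] := inM_phi Hkn Halpha_inj Hr0 HQM HQ0.
split.
  move=> H P hP [R hR eP].
  have nzR : R != 0.
    apply: contraNneq hP => h0; rewrite eP h0 /phi comp_poly0 map_poly0.
    by [].
  have [_ eR] := inM_phi Hkn Halpha_inj Hr0 hR nzR.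
  rewrite eP /L eQ eR lerD2r; exact: H.
move=> H P hP hPM.
have [nzP eP] := inM_phi Hkn Halpha_inj Hr0 hPM hP.
have := H _ nzP (ex_intro2 _ _ P hPM erefl).
by rewrite /L eQ eP lerD2r.
Qed.
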